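(* Let $Q$ be a quantity space over a field $K$ with a basis $\{e_1,\ldots,e_n\}$, and let $x=\mu\cdot\prod_{i=1}^n e_i^{k_i}$ (with $\mu\in K$, $k_i\in\mathbb{Z}$). Then the following are equivalent: (1) $x$ is a non-zero quantity; (2) $\mu\neq0$; (3) $x$ is invertible.
   Context: A scalable monoid over a (unital, associative) ring $R$ is a monoid $X$ (identity $1_X$, product written $xy$) together with a map $R\times X\to X$, $(\alpha,x)\mapsto\alpha\cdot x$, such that $1\cdot x=x$, $\alpha\cdot(\beta\cdot x)=\alpha\beta\cdot x$ and $\alpha\cdot(xy)=(\alpha\cdot x)y=x(\alpha\cdot y)$. A quantity space over a field $K$ is a commutative scalable monoid $Q$ over $K$ for which there exists a basis, i.e. a finite set $\{e_1,\ldots,e_n\}$ of invertible elements of $Q$ such that every $x\in Q$ has a unique expansion $x=\mu\cdot\prod_{i=1}^n e_i^{k_i}$ with $\mu\in K$ and $k_i\in\mathbb{Z}$. Elements of $Q$ are called quantities. A quantity $x$ is a zero quantity if $x=0\cdot x$ (equivalently, $x$ is the zero element $0\cdot y$ of its commensurability class, where $x\sim y$ iff $\alpha\cdot x=\beta\cdot y$ for some $\alpha,\beta\in K$); otherwise it is non-zero. *)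

(* Defs.v *)
From mathcomp Require Import all_boot all_order all_algebra.
Set Implicit Arguments. Unset Strict Implicit. Unset Printing Implicit Defensive.
Import GRing.Theory Num.Theory.
Local Open Scope ring_scope.

Section QS.
Variables (K : fieldType) (Q : Type).
Variables (mul : Q -> Q -> Q) (one : Q) (sc : K -> Q -> Q).

Definition is_comm_scalable_monoid : Prop :=
  (forall x y z, mul x (mul y z) = mul (mul x y) z) /\
  (forall x, mul one x = x) /\ (forall x, mul x one = x) /\
  (forall x y, mul x y = mul y x) /\
  (forall x, sc 1 x = x) /\
  (forall a b x, sc a (sc b x) = sc (a * b) x) /\
  (forall a x y, sc a (mul x y) = mul (sc a x) y /\ sc a (mul x y) = mul x (sc a y)).

Definition invertible (x : Q) : Prop :=
  exists y, mul x y = one /\ mul y x = one.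

Definition zero_quantity (x : Q) : Prop := x = sc 0 x.

Fixpoint npow (x : Q) (m : nat) : Q :=
  if m is m'.+1 then mul x (npow x m') else one.

(* integer power of e, given an inverse e' of e *)
Definition zpow (e e' : Q) (k : int) : Q :=
  match k with
  | Posz m => npow e m
  | Negz m => npow e' m.+1
  end.

Definition expansion (n : nat) (e e' : 'I_n -> Q) (mu : K) (k : 'I_n -> int) : Q :=
  sc mu (\big[mul/one]_(i < n) zpow (e i) (e' i) (k i)).

Definition is_basis (n : nat) (e e' : 'I_n -> Q) : Prop :=
  (forall i, mul (e i) (e' i) = one /\ mul (e' i) (e i) = one) /\
  (forall x : Q, exists mu k,
      x = expansion e e' mu k /\
      forall mu' k', x = expansion e e' mu' k' -> mu' = mu /\ (forall i, k' i = k i)).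

End QS.

(* Main.v *)
Require Import Defs.
From mathcomp Require Import all_boot all_order all_algebra.
Import GRing.Theory.
Local Open Scope ring_scope.

Section Aux.
Variables (K : fieldType) (Q : Type) (mul : Q -> Q -> Q) (one : Q) (sc : K -> Q -> Q).
Hypothesis HQ : is_comm_scalable_monoid mul one sc.

Lemma inv_mul x y : invertible mul one x -> invertible mul one y ->
  invertible mul one (mul x y).
Proof.
case: HQ => A [L1 [R1 [C _]]].
move=> [x' [h1 h2]] [y' [h3 h4]]; exists (mul y' x'); split.
- by rewrite -A (A y) h3 L1 h1.
- by rewrite -A (A x') h2 L1 h4.
Qed.

Lemma inv_one : invertible mul one one.
Proof. case: HQ => A [L1 _]; by exists one; rewrite L1. Qed.

Lemma inv_npow x m : invertible mul one x -> invertible mul one (npow mul one x m).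
Proof. move=> hx; elim: m => [|m IH] /=; [exact: inv_one| exact: inv_mul]. Qed.
End Aux.

Theorem proposition3p4 (K : fieldType) (Q : Type) (mul : Q -> Q -> Q) (one : Q)
    (sc : K -> Q -> Q) (n : nat) (e e' : 'I_n -> Q)
    (HQ : is_comm_scalable_monoid mul one sc)
    (Hbasis : is_basis mul one sc e e')
    (mu : K) (k : 'I_n -> int) (x : Q)
    (Hx : x = expansion mul one sc e e' mu k) :
  (~ zero_quantity sc x <-> mu != 0) /\ (mu != 0 <-> invertible mul one x).
Proof.
have HQ' := HQ.
case: HQ' => A [L1 [R1 [C [S1 [SS SM]]]]].
case: Hbasis => Hinv Huniq.
set P := \big[mul/one]_(i < n) zpow mul one (e i) (e' i) (k i).
have HxP : x = sc mu P by rewrite Hx.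
have HP : invertible mul one P.
  rewrite /P; apply: (big_ind (fun q => invertible mul one q)).
  - exact: (@inv_one _ _ _ _ _ HQ).
  - by move=> a b; apply: (@inv_mul _ _ _ _ _ HQ).
  move=> i _; rewrite /zpow; case: (k i) => m; apply: (@inv_npow _ _ _ _ _ HQ) => //.
  + by exists (e' i); apply: Hinv.
  + by exists (e i); case: (Hinv i).
have not12 : mu != 0 -> ~ zero_quantity sc x.
  move=> mu0 Hz.
  have E0 : x = expansion mul one sc e e' 0 k.
    by rewrite /expansion -/P Hz HxP SS mul0r.
  case: (Huniq x) => mu1 [k1 [_ U]].
  case: (U _ _ Hx) => h1 _; case: (U _ _ E0) => h2 _.
  by move: mu0; rewrite h1 -h2 eqxx.
have inv_mu : invertible mul one x -> mu != 0.
  move=> [y [hy1 _]]; apply/negP => /eqP mu0.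
  have one0 : sc 0 one = one.
    by rewrite -hy1 HxP mu0 (proj1 (SM _ _ _)) SS mulr0.
  have allz : forall z a, sc a z = z.
    move=> z a.
    have zz : sc 0 z = z by rewrite -{2}(R1 z) -one0 -(proj2 (SM _ _ _)) R1.
    by rewrite -zz SS mulr0.
  case: (Huniq one) => mu1 [k1 [E U]].
  have E2 : one = expansion mul one sc e e' (mu1 + 1) k1.
    by rewrite {1}E /expansion !allz.
  case: (U _ _ E2) => h _.
  move/eqP: h; rewrite -subr_eq0 addrC addKr; by rewrite oner_eq0.
split; split.
- move=> nz; apply/negP => /eqP mu0; apply: nz.
  by rewrite /zero_quantity HxP mu0 SS mul0r.
- exact: not12.
- move=> mu0; case: HP => P' [h1 h2].
  exists (sc mu^-1 P'); split.
  + by rewrite HxP -(proj1 (SM _ _ _)) -(proj2 (SM _ _ _)) SS h1 divff // S1.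
  + by rewrite HxP -(proj2 (SM _ _ _)) -(proj1 (SM _ _ _)) SS h2 divff // S1.
- exact: inv_mu.
Qed.
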